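(* Let $q$ and $d$ be positive integers and let $\mathcal{D}=\{(b_1,B_1),\ldots,(b_d,B_d)\}\subseteq [q]\times 2^{[q]}$ with $|B_i|\ge 2$ for all $i\in[d]$. Then ${\sf Div}(\mathcal{E}_{\mathcal{D}})=\overline{\mathcal{D}}$, where ${\sf Div}(\mathcal{E}_{\mathcal{D}})$ is computed with respect to the generators $\varepsilon_{\mathcal{D},1},\ldots,\varepsilon_{\mathcal{D},q}$ in this order. That is, the divisibility relations satisfied by the generators of $\mathcal{E}_{\mathcal{D}}$ are exactly the relations that can be deduced from $\mathcal{D}$.
   Context: Divisibility relations. Let $\Lambda$ be a finite nonempty set and $U=\{u_i:i\in\Lambda\}$ a set of monomials in a polynomial ring over a field, indexed so that $u_i=u_j$ implies $i=j$. A divisibility relation on $U$ is a pair $(b,B)$ with $b\in\Lambda$ and $\emptyset\ne B\subseteq\Lambda$ such that $u_b\mid \mathrm{lcm}(u_i: i\in B)$; ${\sf Div}(U)$ is the set of all of them. A pair $(b,B)\in\Lambda\times 2^\Lambda$ is trivial if $b\in B$. The extensions of $(b,B)$ are $(b,B)^{\sf ex}=\{(b,C): B\subseteq C\subseteq \Lambda\}$. Define the binary operation $(b,B)\circ(c,C)=(b,(B\smallsetminus\{c\})\cup C)$ on $\Lambda\times 2^\Lambda$ (it is neither commutative nor associative). For $\mathcal{D}\subseteq\Lambda\times 2^\Lambda$: $\mathcal{D}^\circ$ is the set of all compositions $(b_1,B_1)\circ\cdots\circ(b_s,B_s)$ with $s\ge1$, $(b_i,B_i)\in\mathcal{D}$,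 taken with every possible bracketing; $\mathcal{D}^{\sf ex}=\bigcup_{(b,B)\in\mathcal{D}}(b,B)^{\sf ex}$; $\Lambda^{\sf triv}=\{(b,B)\in\Lambda\times 2^\Lambda: b\in B\}$; and $\overline{\mathcal{D}}=(\mathcal{D}^\circ)^{\sf ex}\cup\Lambda^{\sf triv}$. Here $\Lambda=[q]$. $\mathcal{D}$-extremal ideals. Let $\mathsf k$ be a field and $S_{[q]}=\mathsf k[y_A:\emptyset\ne A\subseteq[q]]$. For $\mathcal{D}\subseteq [q]\times(2^{[q]}\smallsetminus\{\emptyset\})$ let $Q(\mathcal{D})=\{A\subseteq[q]: A\ne\emptyset,\ A\cap B\ne\emptyset \text{ for all }(b,B)\in\mathcal{D}\text{ with } b\in A\}$, let $\varepsilon_{\mathcal{D},i}=\prod_{A\in Q(\mathcal{D}),\, i\in A} y_A$ for $i\in[q]$, and let $\mathcal{E}_{\mathcal{D}}=(\varepsilon_{\mathcal{D},1},\ldots,\varepsilon_{\mathcal{D},q})\subseteq S_{[q]}$. ${\sf Div}(\mathcal{E}_{\mathcal{D}})$ denotes ${\sf Div}(\{\varepsilon_{\mathcal{D},1},\ldots,\varepsilon_{\mathcal{D},q}\})$ with indexing set $[q]$. *)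

(* Defs.v *)
From mathcomp Require Import all_boot.
Set Implicit Arguments. Unset Strict Implicit. Unset Printing Implicit Defensive.

(* Index set [q] is 'I_q (0-based).  Pairs (b,B) in Lambda x 2^Lambda. *)
Definition rel_t (q : nat) := ('I_q * {set 'I_q})%type.

(* ---------- Monomials of S_[q] = k[y_A : A nonempty subset of [q]] ----------
   A monomial is represented by its exponent vector, indexed by subsets A of [q]
   (the variable y_A).  The index A = set0 is never used (exponent 0 in every
   monomial we build). *)
Definition monomial (q : nat) := {ffun {set 'I_q} -> nat}.

Definition mdvd q (u v : monomial q) : bool := [forall A, u A <= v A].

Definition mlcm q (U : 'I_q -> monomial q) (B : {set 'I_q}) : monomial q :=
  [ffun A => \max_(i in B) U i A].

Definition Div q (U : 'I_q -> monomial q) (p : rel_t q) : Prop :=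
  p.2 != set0 /\ mdvd (U p.1) (mlcm U p.2).

Definition comp q (x y : rel_t q) : rel_t q := (x.1, (x.2 :\ y.1) :|: y.2).

Inductive comp_closure q (D : {set rel_t q}) : rel_t q -> Prop :=
| cc_base x : x \in D -> comp_closure D x
| cc_comp x y : comp_closure D x -> comp_closure D y -> comp_closure D (comp x y).

Definition closureD q (D : {set rel_t q}) (p : rel_t q) : Prop :=
  (exists2 c : 'I_q * {set 'I_q}, comp_closure D c & c.1 = p.1 /\ c.2 \subset p.2)
  \/ p.1 \in p.2.

Definition QD q (D : {set rel_t q}) : {set {set 'I_q}} :=
  [set A : {set 'I_q} | (A != set0) &&
     [forall p in D, (p.1 \in A) ==> (A :&: p.2 != set0)]].

Definition eps q (D : {set rel_t q}) (i : 'I_q) : monomial q :=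
  [ffun A => ((A \in QD D) && (i \in A) : nat)].

(* Main.v *)
From Stdlib Require Import Classical ClassicalEpsilon.
Require Import Defs.
From mathcomp Require Import all_boot.
Set Implicit Arguments. Unset Strict Implicit.

Definition dec (P : Prop) : bool := if excluded_middle_informative P then true else false.
Lemma decP (P : Prop) : reflect P (dec P).
Proof. rewrite /dec; case: excluded_middle_informative => h; constructor => //. Qed.

Lemma epsE q (D : {set rel_t q}) i A :
  eps D i A = ((A \in QD D) && (i \in A) : nat).
Proof. by rewrite /eps ffunE. Qed.

Lemma valid_cc q (D : {set rel_t q}) (hD : forall p, p \in D -> p.2 != set0) c :
 comp_closure D c -> c.2 != set0 /\
   forall A, A \in QD D -> c.1 \in A -> A :&: c.2 != set0.
Proof.
elim=> [x xD | x y _ [nx vx] _ [ny vy]].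
- split; first exact: hD.
  move=> A; rewrite inE => /andP[_ /forallP H] xA.
  exact: (implyP (implyP (H x) xD) xA).
- split.
  + case/set0Pn: ny => z zy; apply/set0Pn; exists z; by rewrite !inE zy orbT.
  + move=> A QA /= xA. have/set0Pn [i] := vx A QA xA.
    rewrite inE => /andP[iA ix]. case: (eqVneq i y.1) => [Ei| ne].
    * rewrite Ei in iA. have/set0Pn [j] := vy A QA iA.
      rewrite inE => /andP[jA jy]. apply/set0Pn; exists j; by rewrite !inE jA jy orbT.
    * apply/set0Pn; exists i; by rewrite !inE iA ne ix.
Qed.

Definition derivr q (D : {set rel_t q}) (B : {set 'I_q}) x :=
  exists2 c, comp_closure D c & c.1 = x /\ c.2 \subset B.

Lemma derivr_step q (D : {set rel_t q}) (B : {set 'I_q}) c : comp_closure D c ->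
  (forall y, y \in c.2 -> y \notin B -> derivr D B y) -> derivr D B c.1.
Proof.
move=> cc H. move Hn: #|c.2 :\: B| => n.
elim: n c cc H Hn => [|n IH] c cc H Hn.
- exists c => //; split=> //. apply/subsetP => z zc; apply/negPn/negP => zB.
  have: z \in c.2 :\: B by rewrite inE zB zc.
  by rewrite (cards0_eq Hn) inE.
- have: 0 < #|c.2 :\: B| by rewrite Hn.
  case/card_gt0P => y; rewrite inE => /andP[yB yc].
  have [cy ccy [e1 e2]] := H y yc yB.
  apply: (IH (Defs.comp c cy) (cc_comp cc ccy)).
  + move=> z; rewrite /Defs.comp /= !inE => /orP[/andP[_ zc] zB|zc zB].
    * exact: H.
    * by rewrite (subsetP e2 z zc) in zB.
  + have -> : (Defs.comp c cy).2 :\: B = (c.2 :\: B) :\ y.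
      apply/setP => z; rewrite /Defs.comp /= !inE e1.
      case zB: (z \in B) => /=; first by rewrite !andbF.
      have -> : (z \in cy.2) = false.
        by apply/negbTE/negP => /(subsetP e2); rewrite zB.
      by rewrite orbF.
    move: Hn; rewrite (cardsD1 y) inE yB yc /= add1n.
    by case.
Qed.

Theorem theorem3p4 (q d : nat) (hq : 0 < q) (hd : 0 < d)
    (bs : 'I_d -> 'I_q) (Bs : 'I_d -> {set 'I_q})
    (hB : forall i : 'I_d, 2 <= #|Bs i|) :
  let D : {set rel_t q} := [set (bs i, Bs i) | i : 'I_d] in
  forall p : rel_t q, Div (eps D) p <-> closureD D p.
Proof.
move=> D.
have hD : forall p, p \in D -> p.2 != set0.
  move=> p /imsetP [i _ ->] /=. rewrite -card_gt0.
  exact: leq_trans _ (hB i).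
move=> p; split.
- case=> ne dv. case: (boolP (p.1 \in p.2)) => bB; [by right|left].
  apply: NNPP => nd.
  pose A := [set x | (x \notin p.2) && ~~ dec (derivr D p.2 x)].
  have bA : p.1 \in A.
    rewrite inE bB /=; apply/negP => /decP; exact: nd.
  have QA : A \in QD D.
    rewrite inE; apply/andP; split; first by apply/set0Pn; exists p.1.
    apply/forallP => x; apply/implyP => xD; apply/implyP => xA.
    apply/negP => /eqP E0.
    move: xA; rewrite inE => /andP[_ /negP]; apply; apply/decP.
    apply: (derivr_step (cc_base xD)) => y yx yB.
    have: y \notin A.
      apply/negP => yA.
      have: y \in A :&: x.2 by rewrite inE yA yx.
      by rewrite E0 inE.
    by rewrite inE yB /= negbK => /decP.
  move/forallP: dv => /(_ A). rewrite /mlcm ffunE QA bA ffunE /= => H.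
  case: (boolP [exists i in p.2, i \in A]).
  + case/existsP => i /andP[iB]; by rewrite inE iB.
  + move/existsPn => H2.
    have : \max_(i in p.2) eps D i A <= 0.
      apply/bigmax_leqP => i iB; rewrite epsE.
      by move: (H2 i); rewrite iB /= => /negbTE ->; rewrite andbF.
    by rewrite leqn0 => /eqP E; rewrite E in H.
- case=> [[c cc [e1 e2]] | bB].
  + have [nc vc] := valid_cc hD cc.
    split.
    * case/set0Pn: nc => z zc; apply/set0Pn; exists z; exact: (subsetP e2).
    * apply/forallP => A; rewrite epsE /mlcm ffunE.
      case: (boolP ((A \in QD D) && (p.1 \in A))) => [/andP[QA bA]|] //=.
      rewrite -e1 in bA. have/set0Pn [i] := vc A QA bA.
      rewrite inE => /andP[iA ic].
      apply: (@leq_trans (eps D i A)); first by rewrite epsE QA iA.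
      by apply: leq_bigmax_cond; apply: (subsetP e2).
  + split; first by apply/set0Pn; exists p.1.
    apply/forallP => A. have E : mlcm (eps D) p.2 A = \max_(i in p.2) eps D i A by rewrite /mlcm ffunE.
    by rewrite E; apply: leq_bigmax_cond.
Qed.
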